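(* Let $a>b\geq 1$ be coprime integers and $p=a/b$ (so $p>1$). Let $\hat n$ be a positive integer, let $N=(2^b+2)\hat n$, and let $S$ be the multiset of binary strings of length $N$ consisting of one copy of $\mathbf{1}_{(2^b+1)\hat n}\circ\mathbf{0}_{\hat n}$ and $2^{a-b}$ copies of $\mathbf{0}_{N}$. For every string $s^*\in\{0,1\}^{N}$: (1) if $d(s^*,\mathbf{0}_N)=\hat n$ and $\mathrm{hs}(s^*,\mathbf{0}_N)\subseteq[(2^b+1)\hat n]$, then $\sum_{s\in S} d(s^*,s)^p=(2^a+2^{a-b})\hat n^{p}$; (2) if $d(s^*,\mathbf{0}_N)\neq\hat n$ or $\mathrm{hs}(s^*,\mathbf{0}_N)\not\subseteq[(2^b+1)\hat n]$, then $\sum_{s\in S} d(s^*,s)^p>(2^a+2^{a-b})\hat n^{p}$. (Sums over $S$ count multiplicities.)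
   Context: For binary strings $s,s'$ of equal length $n$, $d(s,s')$ denotes their Hamming distance (number of positions where they differ) and $\mathrm{hs}(s,s')=\{j\in[n]: s[j]\neq s'[j]\}$ is their Hamming set. $[t]=\{1,\dots,t\}$. $\mathbf{0}_\ell$ and $\mathbf{1}_\ell$ denote the all-zero and all-one strings of length $\ell$, and $\circ$ denotes concatenation. *)

(* Defs.v *)
From Stdlib Require Import Reals List Arith Bool.
Import ListNotations.
Open Scope R_scope.

(* x^y for x >= 0 and y > 0, with the convention 0^y = 0
   (Stdlib's Rpower x y = exp (y * ln x) is only meaningful for x > 0). *)
Definition rpow (x y : R) : R := if Rle_dec x 0 then 0 else Rpower x y.

Definition zeros (n : nat) : list bool := repeat false n.
Definition ones (n : nat) : list bool := repeat true n.

Fixpoint hamming (s t : list bool) : nat :=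
  match s, t with
  | x :: s', y :: t' => ((if Bool.eqb x y then 0 else 1) + hamming s' t')%nat
  | _, _ => 0%nat
  end.

(* Hamming set, with 0-based positions: j is in hs s t iff s[j] <> t[j] *)
Definition hs (s t : list bool) : list nat :=
  filter (fun j => negb (Bool.eqb (nth j s false) (nth j t false)))
         (seq 0 (length s)).

Definition sum_pow_dist (sstar : list bool) (S : list (list bool)) (p : R) : R :=
  fold_right (fun s acc => rpow (INR (hamming sstar s)) p + acc) 0 S.

Definition S_multiset (a b nh : nat) : list (list bool) :=
  (ones ((2 ^ b + 1) * nh) ++ zeros nh)
    :: repeat (zeros ((2 ^ b + 2) * nh)) (2 ^ (a - b)).

(* Main.v *)
Require Import Defs.
From Stdlib Require Import Reals List Arith Bool Lra Lia.
Open Scope R_scope.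

Lemma Rpower_one_base x : Rpower 1 x = 1.
Proof. unfold Rpower; rewrite ln_1, Rmult_0_r, exp_0; reflexivity. Qed.

Lemma Rpower_pos x y : 0 < Rpower x y.
Proof. unfold Rpower; apply exp_pos. Qed.

Lemma rpow_nonneg x y : 0 <= rpow x y.
Proof. unfold rpow; destruct (Rle_dec x 0); [lra|left; apply Rpower_pos]. Qed.

Lemma rpow_gt x y : 0 < x -> rpow x y = Rpower x y.
Proof. intros; unfold rpow; destruct (Rle_dec x 0); lra. Qed.

Lemma rpow_le x z y : 0 < y -> 0 <= x <= z -> rpow x y <= rpow z y.
Proof.
  intros Hy [H0 H1]. destruct (Req_dec x 0) as [->|].
  - unfold rpow at 1; destruct (Rle_dec 0 0); [|lra]. apply rpow_nonneg.
  - rewrite !rpow_gt by lra. apply Rle_Rpower_l; lra.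
Qed.

Lemma rpow_lt x z y : 0 < y -> 0 <= x < z -> rpow x y < rpow z y.
Proof.
  intros Hy [H0 H1]. destruct (Req_dec x 0) as [->|].
  - unfold rpow at 1; destruct (Rle_dec 0 0); [|lra]. rewrite rpow_gt by lra. apply Rpower_pos.
  - rewrite !rpow_gt by lra. apply Rlt_Rpower_l; lra.
Qed.

Lemma rpow_mult x z y : 0 < x -> 0 <= z -> rpow (x * z) y = rpow x y * rpow z y.
Proof.
  intros Hx Hz. destruct (Req_dec z 0) as [->|].
  - rewrite Rmult_0_r. unfold rpow; destruct (Rle_dec 0 0); [|lra]. lra.
  - rewrite !rpow_gt by nra. rewrite Rpower_mult_distr; lra.
Qed.

Lemma bern_strict P w : 1 < P -> 0 <= w -> w <> 1 -> 1 + P * (w - 1) < rpow w P.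
Proof.
  intros HP Hw Hw1. destruct (Req_dec w 0) as [->|Hw0].
  - unfold rpow; destruct (Rle_dec 0 0); lra.
  - rewrite rpow_gt by lra.
    set (f := fun t => Rpower t P - P * t).
    set (f' := fun t => P * Rpower t (P - 1) - P).
    assert (Hd : forall c, 0 < c -> derivable_pt_lim f c (f' c)).
    { intros c Hc. unfold f, f'. apply derivable_pt_lim_minus.
      - apply derivable_pt_lim_power; auto.
      - replace P with (P * 1) at 2 by ring. apply derivable_pt_lim_scal. apply derivable_pt_lim_id. }
    assert (Hf1 : f 1 = 1 - P) by (unfold f; rewrite Rpower_one_base; ring).
    destruct (Rlt_or_le w 1) as [Hlt|Hge].
    + destruct (MVT_cor2 f f' w 1 Hlt) as [c [Hc1 Hc2]].
      { intros c Hc; apply Hd; lra. }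
      assert (H1 : Rpower c (P - 1) < Rpower 1 (P - 1)) by (apply Rlt_Rpower_l; lra).
      rewrite Rpower_one_base in H1.
      unfold f' in Hc1. unfold f in Hc1, Hf1. rewrite Rpower_one_base in Hc1.
      set (R0 := Rpower c (P - 1)) in *.
      assert (Hq : (R0 - 1) * (1 - w) < 0) by nra.
      assert (Hq2 : P * ((R0 - 1) * (1 - w)) < 0) by nra.
      nra.
    + assert (Hgt : 1 < w) by lra.
      destruct (MVT_cor2 f f' 1 w Hgt) as [c [Hc1 Hc2]].
      { intros c Hc; apply Hd; lra. }
      assert (H1 : Rpower 1 (P - 1) < Rpower c (P - 1)) by (apply Rlt_Rpower_l; lra).
      rewrite Rpower_one_base in H1.
      unfold f' in Hc1. unfold f in Hc1, Hf1. rewrite Rpower_one_base in Hc1.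
      set (R0 := Rpower c (P - 1)) in *.
      assert (Hq : 0 < (R0 - 1) * (w - 1)) by nra.
      assert (Hq2 : 0 < P * ((R0 - 1) * (w - 1))) by nra.
      nra.
Qed.

Lemma bern P w : 1 < P -> 0 <= w -> 1 + P * (w - 1) <= rpow w P.
Proof.
  intros. destruct (Req_dec w 1) as [->|]. 
  - rewrite rpow_gt, Rpower_one_base by lra. lra.
  - left; apply bern_strict; auto.
Qed.

Lemma key P c B n K D : 1 < P -> 0 < c -> 0 < B -> 0 < n -> rpow B P = c * B ->
  0 <= K -> 0 <= D -> (B + 1) * n - K <= D ->
  (c + c * B) * rpow n P <= c * rpow K P + rpow D P /\
  ((K <> n \/ (B + 1) * n - K < D) -> (c + c * B) * rpow n P < c * rpow K P + rpow D P).
Proof.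
  intros HP Hc HB Hn HBP HK HD HKD.
  assert (Hrn : 0 < rpow n P) by (rewrite rpow_gt by lra; apply Rpower_pos).
  set (w1 := K / n).
  assert (Ew1 : K = n * w1) by (unfold w1; field; lra).
  assert (Hw1 : 0 <= w1) by (unfold w1; apply Rmult_le_pos; [lra| left; apply Rinv_0_lt_compat; lra]).
  assert (RK : rpow K P = rpow n P * rpow w1 P) by (rewrite Ew1; apply rpow_mult; lra).
  destruct (Rle_or_lt K ((B + 1) * n)) as [HM|HM].
  - set (w2 := ((B + 1) * n - K) / (B * n)).
    assert (Ew2 : (B + 1) * n - K = n * (B * w2)) by (unfold w2; field; lra).
    assert (Hw2 : 0 <= w2).
    { unfold w2; apply Rmult_le_pos; [lra| left; apply Rinv_0_lt_compat; nra]. }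
    assert (RMK : rpow ((B + 1) * n - K) P = rpow n P * (c * B * rpow w2 P)).
    { rewrite Ew2, rpow_mult, rpow_mult, HBP by nra. ring. }
    assert (HBw : B * w2 = B + 1 - w1).
    { apply (Rmult_eq_reg_l n); [|lra]. nra. }
    assert (HDle : rpow ((B + 1) * n - K) P <= rpow D P) by (apply rpow_le; lra).
    assert (B1 : 1 + P * (w1 - 1) <= rpow w1 P) by (apply bern; lra).
    assert (B2 : 1 + P * (w2 - 1) <= rpow w2 P) by (apply bern; lra).
    assert (Hin : c + c * B <= c * rpow w1 P + c * B * rpow w2 P).
    { assert (c * (1 + P * (w1 - 1)) <= c * rpow w1 P) by (apply Rmult_le_compat_l; lra).
      assert (c * B * (1 + P * (w2 - 1)) <= c * B * rpow w2 P) by (apply Rmult_le_compat_l; nra).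
      nra. }
    split.
    + rewrite RK. rewrite RMK in HDle. nra.
    + intros [Hne|Hlt].
      * assert (Hw1' : w1 <> 1) by (intro E; apply Hne; rewrite Ew1, E; ring).
        assert (B1' : 1 + P * (w1 - 1) < rpow w1 P) by (apply bern_strict; lra).
        assert (c * (1 + P * (w1 - 1)) < c * rpow w1 P) by (apply Rmult_lt_compat_l; lra).
        assert (c * B * (1 + P * (w2 - 1)) <= c * B * rpow w2 P) by (apply Rmult_le_compat_l; nra).
        assert (Hin' : c + c * B < c * rpow w1 P + c * B * rpow w2 P) by nra.
        rewrite RK. rewrite RMK in HDle.
        assert (rpow n P * (c + c * B) < rpow n P * (c * rpow w1 P + c * B * rpow w2 P))
          by (apply Rmult_lt_compat_l; lra).
        nra.
      * assert (HDlt : rpow ((B + 1) * n - K) P < rpow D P) by (apply rpow_lt; lra).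
        rewrite RK. rewrite RMK in HDlt. nra.
  - assert (Hw1g : B + 1 < w1) by (apply (Rmult_lt_reg_l n); nra).
    assert (B1' : 1 + P * (w1 - 1) < rpow w1 P) by (apply bern_strict; lra).
    assert (Hw : B + 1 < rpow w1 P) by nra.
    assert (rpow n P * (c * (B + 1)) < rpow n P * (c * rpow w1 P)).
    { apply Rmult_lt_compat_l; [lra|]. apply Rmult_lt_compat_l; lra. }
    assert (0 <= rpow D P) by apply rpow_nonneg.
    rewrite RK. split; [|intros _]; nra.
Qed.

Definition cnt (l : list bool) := hamming l (zeros (length l)).

Lemma ham_app l1 l2 m1 m2 : length l1 = length m1 ->
  hamming (l1 ++ l2) (m1 ++ m2) = (hamming l1 m1 + hamming l2 m2)%nat.
Proof.
  revert m1; induction l1 as [|x l1 IH]; intros [|y m1] H; simpl in *; try lia.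
  rewrite IH by lia. lia.
Qed.

Lemma ham_ones l : (hamming l (ones (length l)) + cnt l)%nat = length l.
Proof.
  unfold cnt, ones, zeros; induction l as [|x l IH]; simpl; auto.
  destruct x; simpl; lia.
Qed.

Lemma cnt0_nth l i : cnt l = 0%nat -> nth i l false = false.
Proof.
  unfold cnt, zeros; revert i; induction l as [|x l IH]; intros i H; simpl in *.
  - destruct i; auto.
  - destruct x; simpl in H; [lia|]. destruct i; auto.
Qed.

Lemma cntpos l : (0 < cnt l)%nat -> exists i, (i < length l)%nat /\ nth i l false = true.
Proof.
  unfold cnt, zeros; induction l as [|x l IH]; intros H; simpl in *.
  - lia.
  - destruct x; simpl in H.
    + exists 0%nat; split; auto; lia.
    + destruct (IH H) as [i [Hi Hn]]. exists (S i); split; auto; lia.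
Qed.

Lemma fold_rep sstar z k P :
  fold_right (fun s acc => rpow (INR (hamming sstar s)) P + acc) 0 (repeat z k)
  = INR k * rpow (INR (hamming sstar z)) P.
Proof.
  induction k as [|k IH]; simpl repeat; simpl fold_right.
  - simpl; ring.
  - rewrite IH, S_INR; ring.
Qed.

Lemma zeros_app m n : zeros (m + n) = zeros m ++ zeros n.
Proof. unfold zeros; apply repeat_app. Qed.

Lemma nth_zeros j n : nth j (zeros n) false = false.
Proof. unfold zeros; apply nth_repeat. Qed.

Theorem lemma1 (a b nh : nat) (hab : (b < a)%nat) (hb : (1 <= b)%nat)
  (hcop : Nat.gcd a b = 1%nat) (hn : (1 <= nh)%nat)
  (sstar : list bool) (hlen : length sstar = ((2 ^ b + 2) * nh)%nat) :
  let N := ((2 ^ b + 2) * nh)%nat in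
  let p := INR a / INR b in
  let target := INR (2 ^ a + 2 ^ (a - b)) * rpow (INR nh) p in
  let cond := hamming sstar (zeros N) = nh /\
              (forall j, In j (hs sstar (zeros N)) -> (j < (2 ^ b + 1) * nh)%nat) in
  (cond -> sum_pow_dist sstar (S_multiset a b nh) p = target) /\
  (~ cond -> sum_pow_dist sstar (S_multiset a b nh) p > target).
Proof.
  intros N P target cond.
  set (q := (2 ^ b)%nat) in *.
  set (M := ((q + 1) * nh)%nat).
  assert (EN : N = (M + nh)%nat) by (unfold N, M; lia).
  set (s1 := firstn M sstar). set (s2 := skipn M sstar).
  assert (Es : sstar = s1 ++ s2) by (symmetry; apply firstn_skipn).
  assert (L1 : length s1 = M) by (unfold s1; rewrite length_firstn; lia).
  assert (L2 : length s2 = nh) by (unfold s2; rewrite length_skipn; lia).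
  set (x := cnt s1). set (y := cnt s2).
  assert (HK : hamming sstar (zeros N) = (x + y)%nat).
  { rewrite EN, zeros_app, Es, ham_app by (unfold zeros; rewrite repeat_length; lia).
    unfold x, y, cnt; rewrite L1, L2; reflexivity. }
  assert (Hx : (x <= M)%nat).
  { pose proof (ham_ones s1). fold x in H. lia. }
  assert (HD : hamming sstar (ones M ++ zeros nh) = (M - x + y)%nat).
  { rewrite Es, ham_app by (unfold ones; rewrite repeat_length; lia).
    pose proof (ham_ones s1). fold x in H. rewrite L1 in H.
    unfold y, cnt; rewrite L2. lia. }
  assert (Hsum : sum_pow_dist sstar (S_multiset a b nh) P =
     rpow (INR (M - x + y)) P + INR (2 ^ (a - b)) * rpow (INR (x + y)) P).
  { unfold sum_pow_dist, S_multiset. simpl fold_right. fold q. fold M.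
    rewrite HD. rewrite fold_rep. fold N. rewrite HK. reflexivity. }
  set (c := INR (2 ^ (a - b))). set (B := INR q). set (n := INR nh).
  assert (HP : 1 < P).
  { unfold P. apply lt_INR in hab. assert (0 < INR b) by (apply lt_0_INR; lia).
    apply (Rmult_lt_reg_r (INR b)); auto. field_simplify; lra. }
  assert (Hc : 0 < c) by (apply lt_0_INR; apply Nat.neq_0_lt_0, Nat.pow_nonzero; lia).
  assert (HB : 0 < B) by (apply lt_0_INR; apply Nat.neq_0_lt_0, Nat.pow_nonzero; lia).
  assert (Hn : 0 < n) by (apply lt_0_INR; lia).
  assert (HcB : c * B = INR (2 ^ a)).
  { unfold c, B, q. rewrite <- mult_INR, <- Nat.pow_add_r. f_equal. f_equal. lia. }
  assert (HBP : rpow B P = c * B).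
  { rewrite HcB. rewrite rpow_gt by lra. unfold B, q. rewrite !pow_INR. simpl (INR 2).
    rewrite <- Rpower_pow by lra. rewrite Rpower_mult.
    replace (INR b * P) with (INR a).
    - apply Rpower_pow; lra.
    - unfold P. field. apply not_0_INR; lia. }
  assert (Htarget : target = (c + c * B) * rpow n P).
  { unfold target. rewrite plus_INR, <- HcB. fold c. change (INR nh) with n. ring. }
  assert (EM : INR M = (B + 1) * n) by (unfold M, B, n; rewrite mult_INR, plus_INR; simpl; ring).
  assert (ED : INR (M - x + y) = INR M - INR x + INR y) by (rewrite plus_INR, minus_INR by lia; ring).
  assert (EK : INR (x + y) = INR x + INR y) by apply plus_INR.
  assert (Hy0 : 0 <= INR y) by apply pos_INR.
  assert (Hx0 : 0 <= INR x) by apply pos_INR.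
  assert (HxM : INR x <= INR M) by (apply le_INR; lia).
  pose proof (key P c B n (INR (x + y)) (INR (M - x + y)) HP Hc HB Hn HBP
     ltac:(apply pos_INR) ltac:(apply pos_INR) ltac:(rewrite ED, EK, EM; lra)) as [Kle Klt].
  assert (Hc1 : (forall j, In j (hs sstar (zeros N)) -> (j < M)%nat) -> y = 0%nat).
  { intros Hj. destruct (Nat.eq_dec y 0) as [|Hy]; auto. exfalso.
    destruct (cntpos s2) as [i [Hi Hni]]; [fold y; lia|].
    assert (Hin : In (M + i)%nat (hs sstar (zeros N))).
    { unfold hs. apply filter_In. split.
      - apply in_seq. lia.
      - rewrite nth_zeros, Es, app_nth2 by lia. rewrite L1.
        replace (M + i - M)%nat with i by lia. rewrite Hni. reflexivity. }
    specialize (Hj _ Hin). lia. }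
  assert (Hc2 : y = 0%nat -> forall j, In j (hs sstar (zeros N)) -> (j < M)%nat).
  { intros Hy j Hin. unfold hs in Hin. apply filter_In in Hin as [Hin Hf].
    apply in_seq in Hin. destruct (Nat.lt_ge_cases j M) as [|Hge]; auto. exfalso.
    rewrite nth_zeros, Es, app_nth2 in Hf by lia.
    rewrite cnt0_nth in Hf by (fold y; auto). discriminate. }
  split.
  - intros [H1 H2]. rewrite HK in H1. assert (Ey : y = 0%nat) by (apply Hc1; exact H2).
    rewrite Hsum, Htarget.
    replace (M - x + y)%nat with (q * nh)%nat by (unfold M; lia).
    rewrite H1. rewrite mult_INR. fold B n. rewrite rpow_mult, HBP by lra. change (INR (2 ^ (a - b))) with c. ring.
  - intros Hnc. rewrite Hsum, Htarget.
    assert (Hstrict : INR (x + y) <> n \/ (B + 1) * n - INR (x + y) < INR (M - x + y)).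
    { destruct (Nat.eq_dec (x + y) nh) as [E|E].
      - destruct (Nat.eq_dec y 0) as [Ey|Ey].
        + exfalso. apply Hnc. split; [rewrite HK; auto|]. apply Hc2; auto.
        + right. rewrite ED, EK, EM. assert (0 < INR y) by (apply lt_0_INR; lia). lra.
      - left. intro E'. apply E. apply INR_eq. exact E'. }
    specialize (Klt Hstrict). unfold Rgt. change (INR (2 ^ (a - b))) with c. change (INR nh) with n. lra.
Qed.
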